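(* Let $\sigma$ be an implicit signature and $\mathsf V$ a pseudovariety of finite semigroups. If $\mathsf V$ is $\sigma$-PR then $\mathsf V$ is $\sigma$-full; and if $\mathsf V$ is strongly $\sigma$-PR then $\mathsf V$ is strongly $\sigma$-full.
   Context: $\overline{\Omega}_X\mathsf V$ is the free pro-$\mathsf V$ semigroup on a finite alphabet $X$; $\Omega^\sigma_X\mathsf V$ is its subalgebra generated by $X$ under the operations of $\sigma$ (an implicit signature: a set of implicit operations of finite arity containing multiplication), with the induced topology; $\mathsf S$ is the pseudovariety of all finite semigroups and $p_{\mathsf V}:\overline{\Omega}_X\mathsf S\to\overline{\Omega}_X\mathsf V$ the natural continuous homomorphism. The Pin-Reutenauer procedure holds for a class $\mathcal C$ of subsets of $\Omega^\sigma_X\mathsf V$ if for all $K,L\in\mathcal C$, with closures in $\Omega^\sigma_X\mathsf V$, $\overline{KL}=\overline K\,\overline L$ and $\overline{L^+}=\langle\overline L\rangle_\sigma$ (the $\sigma$-subalgebra generated by $\overline L$). $\mathsf V$ is $\sigma$-PR if for every finite $X$ this holds for the class of all sets $p_{\mathsf V}(L)$ with $L\subseteq X^+$ rational, and strongly $\sigma$-PR if for every finite $X$ it holds for the class of all rational subsets of $\Omega^\sigma_X\mathsf V$. $\mathsf V$ is full with respect to a class $\mathcal C$ of subsets of $\Omega^\sigma_X\mathsf S$ if $p_{\mathsf V}(\overline L)=\overline{p_{\mathsf V}(L)}$ for all $L\in\mathcal C$ (left closure in $\Omega^\sigma_X\mathsf S$, right closure in $\Omega^\sigma_X\mathsf V$);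 $\mathsf V$ is $\sigma$-full if for every finite $X$ it is full with respect to the set of rational languages of $X^+$, and strongly $\sigma$-full if for every finite $X$ it is full with respect to all rational subsets of $\Omega^\sigma_X\mathsf S$. *)

(* Defs.v *)
From Stdlib Require Import FunctionalExtensionality List.
From mathcomp Require Import all_boot.
Set Implicit Arguments. Unset Strict Implicit. Unset Printing Implicit Defensive.

Definition seteq {T} (A B : T -> Prop) := forall x, A x <-> B x.
Definition img {T U} (f : T -> U) (A : T -> Prop) : U -> Prop :=
  fun y => exists x, A x /\ y = f x.
Definition setprod {T} (mul : T -> T -> T) (A B : T -> Prop) : T -> Prop :=
  fun x => exists a b, A a /\ B b /\ x = mul a b.
Definition splus {T} (mul : T -> T -> T) (A : T -> Prop) : T -> Prop :=
  fun x => forall B : T -> Prop, (forall a, A a -> B a) ->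
    (forall a b, B a -> B b -> B (mul a b)) -> B x.

(* Rational subsets of a semigroup M (given as a mul-closed subset of T):
   smallest class containing the finite subsets of M and closed under
   union, product and _^+ (closed under extensional equality of sets). *)
Inductive rat {T} (mul : T -> T -> T) (M : T -> Prop) : (T -> Prop) -> Prop :=
| rat_fin (s : seq T) : (forall x, List.In x s -> M x) ->
    rat mul M (fun x => List.In x s)
| rat_union A B : rat mul M A -> rat mul M B -> rat mul M (fun x => A x \/ B x)
| rat_prod A B : rat mul M A -> rat mul M B -> rat mul M (setprod mul A B)
| rat_plus A : rat mul M A -> rat mul M (splus mul A)
| rat_ext A B : rat mul M A -> seteq A B -> rat mul M B.

Record fsg := FSG {
  fsg_n : nat;
  fsg_mul : 'I_fsg_n.+1 -> 'I_fsg_n.+1 -> 'I_fsg_n.+1;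
  fsg_assoc : associative fsg_mul }.
Definition car (S : fsg) := 'I_(fsg_n S).+1.
Definition smul (S : fsg) : car S -> car S -> car S := @fsg_mul S.

Definition is_hom (S T : fsg) (h : car S -> car T) :=
  forall x y, h (smul x y) = smul (h x) (h y).

(* Pseudovariety: contains the trivial semigroup, closed under homomorphic
   images (hence isomorphism), and under subsemigroups of binary direct
   products (which together give finite direct products and subsemigroups). *)
Definition pseudovariety (V : fsg -> Prop) : Prop :=
  (forall S, fsg_n S = 0 -> V S) /\
  (forall S T (h : car S -> car T), V S -> is_hom h ->
      (forall y, exists x, h x = y) -> V T) /\
  (forall P S T (f : car P -> car S) (g : car P -> car T),
      V S -> V T -> is_hom f -> is_hom g ->
      (forall x y, f x = f y -> g x = g y -> x = y) -> V P).

Definition Sall (S : fsg) : Prop := True.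

(* ---------- free pro-V semigroup as implicit operations ---------- *)
Record OB (V : fsg -> Prop) (X : finType) := MkOB {
  ev : forall S : fsg, V S -> (X -> car S) -> car S;
  ev_nat : forall (S T : fsg) (hS : V S) (hT : V T) (h : car S -> car T),
    is_hom h -> forall phi, h (ev hS phi) = ev hT (h \o phi) }.
Arguments ev {V X} o {S} hS phi.

Lemma mulOB_nat V X (a b : OB V X) (S T : fsg) (hS : V S) (hT : V T)
  (h : car S -> car T) : is_hom h -> forall phi,
  h (smul (ev a hS phi) (ev b hS phi)) = smul (ev a hT (h \o phi)) (ev b hT (h \o phi)).
Proof. by move=> hh phi; rewrite hh !(ev_nat _ _ hT hh). Qed.

Definition mulOB V X (a b : OB V X) : OB V X :=
  @MkOB V X (fun S hS phi => smul (ev a hS phi) (ev b hS phi)) (mulOB_nat a b).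

Definition genOB V (X : finType) (x : X) : OB V X :=
  @MkOB V X (fun S _ phi => phi x) (fun _ _ _ _ _ _ _ => erefl).

Lemma applyOB_nat V X k (w : OB Sall 'I_k) (ps : 'I_k -> OB V X)
  (S T : fsg) (hS : V S) (hT : V T) (h : car S -> car T) : is_hom h -> forall phi,
  h (ev w (I : Sall S) (fun i => ev (ps i) hS phi)) =
  ev w (I : Sall T) (fun i => ev (ps i) hT (h \o phi)).
Proof.
move=> hh phi; rewrite (ev_nat w I I hh); congr (ev w I _).
by apply: functional_extensionality => i /=; rewrite (ev_nat _ _ hT hh).
Qed.

Definition applyOB V X k (w : OB Sall 'I_k) (ps : 'I_k -> OB V X) : OB V X :=
  @MkOB V X (fun S hS phi => ev w (I : Sall S) (fun i => ev (ps i) hS phi))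
    (applyOB_nat w ps).

Definition pV (V : fsg -> Prop) X (p : OB Sall X) : OB V X :=
  @MkOB V X (fun S _ phi => ev p (I : Sall S) phi)
    (fun S T _ _ h hh phi => ev_nat p I I hh phi).

(* topology: pointwise convergence (product of finite discrete spaces);
   closure of A = elements agreeing with some element of A on any finite
   set of coordinates (S, phi). *)
Record pt (V : fsg -> Prop) (X : finType) := Pt {
  ptS : fsg; ptV : V ptS; ptphi : X -> car ptS }.
Definition evp V X (p : OB V X) (q : pt V X) := ev p (ptV q) (ptphi q).
Definition cl V X (A : OB V X -> Prop) : OB V X -> Prop :=
  fun p => forall n (qs : 'I_n -> pt V X),
    exists r, A r /\ forall i, evp r (qs i) = evp p (qs i).

Definition signature := forall k : nat, OB Sall 'I_k -> Prop.
Definition implicit_signature (sigma : signature) : Prop :=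
  exists w, sigma 2 w /\ forall (S : fsg) (phi : 'I_2 -> car S),
    ev w (I : Sall S) phi = smul (phi ord0) (phi ord_max).

Definition sigsub V X (sigma : signature) (A : OB V X -> Prop) : OB V X -> Prop :=
  fun p => forall B : OB V X -> Prop, (forall a, A a -> B a) ->
    (forall k w (ps : 'I_k -> OB V X), sigma k w -> (forall i, B (ps i)) ->
       B (applyOB w ps)) -> B p.

Definition Om V X (sigma : signature) : OB V X -> Prop :=
  sigsub sigma (fun p => exists x, p = genOB V x).

Definition clo V X (sigma : signature) (A : OB V X -> Prop) : OB V X -> Prop :=
  fun p => Om sigma p /\ cl A p.

(* nonempty words X^+ as (first letter, rest); concatenation *)
Definition nwmul (X : Type) (u v : X * seq X) : X * seq X :=
  (u.1, u.2 ++ v.1 :: v.2).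
Definition ratlang (X : Type) (L : X * seq X -> Prop) :=
  rat (@nwmul X) (fun _ => True) L.
Definition word (X : finType) (u : X * seq X) : OB Sall X :=
  foldl (fun acc y => mulOB acc (genOB Sall y)) (genOB Sall u.1) u.2.

Definition PR_for V X (sigma : signature) (C : (OB V X -> Prop) -> Prop) :=
  forall K L, C K -> C L ->
    seteq (clo sigma (setprod (@mulOB V X) K L))
          (setprod (@mulOB V X) (clo sigma K) (clo sigma L)) /\
    seteq (clo sigma (splus (@mulOB V X) L)) (sigsub sigma (clo sigma L)).

Definition sigma_PR (V : fsg -> Prop) (sigma : signature) :=
  forall X : finType, PR_for sigma
    (fun K : OB V X -> Prop => exists L, ratlang L /\
       seteq K (img (fun u => @pV V X (word u)) L)).

Definition strongly_sigma_PR (V : fsg -> Prop) (sigma : signature) :=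
  forall X : finType, PR_for sigma (rat (@mulOB V X) (Om sigma)).

Definition full_for (V : fsg -> Prop) X (sigma : signature)
  (C : (OB Sall X -> Prop) -> Prop) :=
  forall L, C L -> seteq (img (@pV V X) (clo sigma L)) (clo sigma (img (@pV V X) L)).

Definition sigma_full (V : fsg -> Prop) (sigma : signature) :=
  forall X : finType, full_for V sigma
    (fun L' => exists L, ratlang L /\ seteq L' (img (@word X) L)).

Definition strongly_sigma_full (V : fsg -> Prop) (sigma : signature) :=
  forall X : finType, full_for V sigma (rat (@mulOB Sall X) (Om sigma)).

(* Main.v *)
Require Import Defs.
From mathcomp Require Import all_boot.
From Stdlib Require Import FunctionalExtensionality ProofIrrelevance ClassicalEpsilon Classical.
From Stdlib Require List.
Set Implicit Arguments. Unset Strict Implicit. Unset Printing Implicit Defensive.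

Lemma card_predK (F : finType) (x0 : F) : #|F| = (#|F|.-1).+1.
Proof. by rewrite prednK //; apply/card_gt0P; exists x0. Qed.

Definition encF (F : finType) (x0 : F) (x : F) : 'I_(#|F|.-1).+1 :=
  cast_ord (card_predK x0) (enum_rank x).
Definition decF (F : finType) (x0 : F) (a : 'I_(#|F|.-1).+1) : F :=
  enum_val (cast_ord (esym (card_predK x0)) a).

Lemma encFK F x0 : cancel (@encF F x0) (@decF F x0).
Proof. by move=> x; rewrite /encF /decF cast_ordK enum_rankK. Qed.
Lemma decFK F x0 : cancel (@decF F x0) (@encF F x0).
Proof. by move=> a; rewrite /encF /decF enum_valK cast_ordKV. Qed.

Definition mulF (F : finType) (op : F -> F -> F) (x0 : F) a b :=
  encF x0 (op (decF x0 a) (decF x0 b)).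
Lemma mulF_assoc F op (opA : associative op) x0 : associative (@mulF F op x0).
Proof. by move=> a b c; rewrite /mulF !encFK opA. Qed.

Definition fsg_of (F : finType) (op : F -> F -> F) (opA : associative op) (x0 : F) : fsg :=
  @FSG (#|F|.-1) (@mulF F op x0) (mulF_assoc opA x0).

Lemma encF_hom (F : finType) (op : F -> F -> F) (opA : associative op) (x0 : F) (x y : F) :
  encF x0 (op x y) = smul (S := fsg_of opA x0) (encF x0 x) (encF x0 y).
Proof. by rewrite /smul /= /mulF !encFK. Qed.
Lemma decF_hom (F : finType) (op : F -> F -> F) (opA : associative op) (x0 : F) (a b : car (fsg_of opA x0)) :
  decF x0 (smul a b) = op (decF x0 a) (decF x0 b).
Proof. by rewrite /smul /= /mulF encFK. Qed.

Definition triv_sg : fsg := @FSG 0 (fun _ _ => ord0) (fun _ _ _ => erefl).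

Definition prod_op (S T : fsg) (a b : car S * car T) : car S * car T :=
  (smul a.1 b.1, smul a.2 b.2).
Lemma prod_opA S T : associative (@prod_op S T).
Proof.
move=> [a1 a2] [b1 b2] [c1 c2]; rewrite /prod_op /=.
by rewrite /smul !fsg_assoc.
Qed.
Definition prod_sg (S T : fsg) : fsg :=
  @fsg_of (prod (car S) (car T)) (@prod_op S T) (@prod_opA S T) (ord0, ord0).

Lemma combine (X : finType) (s : seq (pt Sall X)) :
  exists (P : fsg) (g : X -> car P), forall q, List.In q s ->
    exists pi : car P -> car (ptS q), is_hom pi /\ forall x, pi (g x) = ptphi q x.
Proof.
elim: s => [|q s [P [g IH]]].
  by exists triv_sg, (fun _ => ord0).
pose P' := prod_sg P (ptS q).
exists P', (fun x => encF (ord0, ord0) (g x, ptphi q x)) => q' [<-|Hq'].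
- exists (fun a => (decF (ord0, ord0) a).2); split.
    by move=> a b; rewrite /P' /prod_sg decF_hom.
  by move=> x; rewrite encFK.
- have [pi [hpi Hpi]] := IH q' Hq'.
  exists (fun a => pi (decF (ord0, ord0) a).1); split.
    by move=> a b; rewrite /P' /prod_sg decF_hom /= hpi.
  by move=> x; rewrite encFK /= Hpi.
Qed.

Definition range_of (P : fsg) k (g : 'I_k -> car P) : car P -> Prop :=
  fun y => exists i, y = g i.

Definition decP (P : Prop) : bool := if excluded_middle_informative P then true else false.
Lemma decPP (P : Prop) : decP P <-> P.
Proof. by rewrite /decP; case: excluded_middle_informative. Qed.

Lemma ev_in_splus k (w : OB Sall 'I_k.+1) (P : fsg) (g : 'I_k.+1 -> car P) :
  splus (@smul P) (range_of g) (ev w (I : Sall P) g).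
Proof.
pose Tb := fun x : car P => decP (splus (@smul P) (range_of g) x).
pose F := {x : car P | Tb x}.
have Tmul : forall a b : F, Tb (smul (val a) (val b)).
  move=> [a Ha] [b Hb] /=; apply/decPP => B HB HBm.
  by apply: (HBm); [exact: ((proj1 (decPP _) Ha) B HB HBm) | exact: ((proj1 (decPP _) Hb) B HB HBm)].
pose op := fun a b : F => (exist _ (smul (val a) (val b)) (Tmul a b) : F).
have opA : associative op.
  move=> a b c; apply: val_inj => /=. rewrite /smul. exact: fsg_assoc.
have Tg : forall i, Tb (g i).
  by move=> i; apply/decPP => B HB _; apply: HB; exists i.
pose x0 := (exist _ (g ord0) (Tg ord0) : F).
pose T := fsg_of opA x0.
pose iota := fun a : car T => val (decF x0 a).
have hiota : is_hom iota.
  by move=> a b; rewrite /iota /T decF_hom.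
pose gT := fun i => (encF x0 (exist _ (g i) (Tg i) : F) : car T).
have Eg : g = iota \o gT.
  by apply: functional_extensionality => i; rewrite /iota /gT /= encFK.
have -> : ev w (I : Sall P) g = ev w (I : Sall P) (iota \o gT) by rewrite -Eg.
rewrite -(ev_nat w I I hiota gT) /iota.
move: (decF x0 (ev w I gT)) => [y Hy] /=. move: Hy. rewrite /Tb. move/decPP. done.
Qed.

Lemma OB_ext V X (a b : OB V X) : (forall S (hS : V S) phi, ev a hS phi = ev b hS phi) -> a = b.
Proof.
case: a b => ea na [eb nb] /= H.
have E : ea = eb.
{ apply: functional_extensionality_dep => S; apply: functional_extensionality_dep => hS; apply: functional_extensionality => phi; exact: H. }
subst eb; f_equal; apply: proof_irrelevance.
Qed.

Definition lz_sg : fsg := @FSG 1 (fun x _ => x) (fun _ _ _ => erefl).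
Lemma OB0_empty (w : OB Sall 'I_0) : False.
Proof.
pose sw := fun x : car lz_sg => (if x == ord0 then ord_max else ord0 : car lz_sg).
have hsw : is_hom sw by [].
pose phi := fun _ : 'I_0 => (ord0 : car lz_sg).
have := ev_nat w I I hsw phi.
have -> : sw \o phi = phi by apply: functional_extensionality => -[].
rewrite /sw; case: (ev w I phi) => -[|[|]] //.
Qed.

Lemma in_ListIn (T : eqType) (x : T) (s : seq T) : x \in s -> List.In x s.
Proof. elim: s => //= y s IH; rewrite in_cons => /orP [/eqP ->|/IH]; by [left|right]. Qed.

Lemma cl_apply X (C : OB Sall X -> Prop)
  (Cmul : forall a b, C a -> C b -> C (mulOB a b)) k (w : OB Sall 'I_k)
  (ps : 'I_k -> OB Sall X) : (forall i, cl C (ps i)) -> cl C (applyOB w ps).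
Proof.
case: k w ps => [w|k w] ps Hps; first by case: (OB0_empty w).
move=> n qs.
pose mk := fun j => @Pt Sall 'I_k.+1 (ptS (qs j)) I (fun i => evp (ps i) (qs j)).
have [P [g Hg]] := combine (List.map mk (enum 'I_n)).
have key : forall y, splus (@smul P) (range_of g) y -> exists r, C r /\
    forall j (pi : car P -> car (ptS (qs j))), is_hom pi ->
      (forall i, pi (g i) = evp (ps i) (qs j)) -> pi y = evp r (qs j).
  move=> y Hy; pattern y; apply: Hy.
    move=> _ [i ->]; have [r [Cr Hr]] := Hps i n qs.
    by exists r; split => // j pi _ Hpi; rewrite Hpi Hr.
  move=> a b [r1 [C1 H1]] [r2 [C2 H2]]; exists (mulOB r1 r2); split; first exact: Cmul.
  by move=> j pi hpi Hpi; rewrite hpi (H1 j pi hpi Hpi) (H2 j pi hpi Hpi).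
have [r [Cr Hr]] := key _ (@ev_in_splus k w P g).
exists r; split => // j.
have /Hg [pi [hpi Hpi]] : List.In (mk j) (List.map mk (enum 'I_n)).
  by apply: List.in_map; apply: in_ListIn; rewrite mem_enum.
rewrite -(Hr j pi hpi Hpi) (ev_nat w I I hpi g).
rewrite /evp /=; congr (ev w I _).
by apply: functional_extensionality => i /=; rewrite Hpi.
Qed.

Section Gen.
Variables (V : fsg -> Prop) (X : finType).
Variable sigma : signature.
Arguments sigma : clear implicits.

Lemma sigsub_incl (A : OB V X -> Prop) a : A a -> sigsub sigma A a.
Proof. by move=> Ha B HB _; apply: HB. Qed.

Lemma sigsub_apply (A : OB V X -> Prop) k w (ps : 'I_k -> OB V X) :
  sigma k w -> (forall i, sigsub sigma A (ps i)) -> sigsub sigma A (applyOB w ps).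
Proof. by move=> Hw Hps B HB Hc; exact: (Hc k w ps Hw (fun i => Hps i B HB Hc)). Qed.

Lemma Om_gen (x : X) : Om sigma (genOB V x).
Proof. by apply: sigsub_incl; exists x. Qed.

Lemma Om_mul : implicit_signature sigma ->
  forall a b, Om sigma a -> Om sigma b -> Om sigma (@mulOB V X a b).
Proof.
move=> [w [Hw Hev]] a b Ha Hb.
pose ps := fun i : 'I_2 => if i == ord0 then a else b.
have -> : mulOB a b = applyOB w ps.
  apply: OB_ext => S hS phi /=; by rewrite Hev.
by apply: sigsub_apply => // -[[|[|]]] //.
Qed.

Lemma cl_mono (A B : OB V X -> Prop) p : (forall x, A x -> B x) -> cl A p -> cl B p.
Proof. by move=> AB H n qs; have [r [Ar Hr]] := H n qs; exists r; split => //; apply: AB. Qed.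

Lemma cl_refl (A : OB V X -> Prop) p : A p -> cl A p.
Proof. by move=> Ap n qs; exists p. Qed.

Lemma clo_mono (A B : OB V X -> Prop) p : (forall x, A x -> B x) -> clo sigma A p -> clo sigma B p.
Proof. by move=> AB [H1 H2]; split => //; apply: cl_mono H2. Qed.

Lemma cl_mul (A B : OB V X -> Prop) a b : cl A a -> cl B b -> cl (setprod (@mulOB V X) A B) (mulOB a b).
Proof.
move=> Ha Hb n qs; have [r1 [A1 H1]] := Ha n qs; have [r2 [B2 H2]] := Hb n qs.
exists (mulOB r1 r2); split; first by exists r1, r2.
by move=> i; rewrite /evp /= -!/(evp _ _) H1 H2.
Qed.

Lemma cl_union (A B : OB V X -> Prop) p : cl (fun x => A x \/ B x) p -> cl A p \/ cl B p.
Proof.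
move=> H; case: (classic (cl A p)) => [hA|hA]; [by left|right].
move=> n qs; apply: NNPP => hB.
have [n1 h1] := not_all_ex_not _ _ hA.
have [qs1 h2] := not_all_ex_not _ _ h1.
pose qs' := fun i : 'I_(n1 + n) => match split i with inl a => qs1 a | inr b => qs b end.
have [r [ABr Hr]] := H _ qs'.
case: ABr => [Ar|Br].
- apply: h2; exists r; split => // a.
  by have := Hr (lshift n a); rewrite /qs' (unsplitK (inl a) : split (lshift n a) = inl a).
- apply: hB; exists r; split => // b.
  by have := Hr (rshift n1 b); rewrite /qs' (unsplitK (inr b) : split (rshift n1 b) = inr b).
Qed.

Lemma OB_neq (a b : OB V X) : a <> b -> exists q : pt V X, evp a q <> evp b q.
Proof.
move=> ne; apply: NNPP => H; apply: ne; apply: OB_ext => S hS phi.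
apply: NNPP => H'; apply: H; by exists (Pt hS phi).
Qed.

Lemma cl_fin (s : list (OB V X)) p : cl (fun x => List.In x s) p -> List.In p s.
Proof.
elim: s => [|r s IH] H.
  by have [r [[] _]] := H 0 (fun i => match i with Ordinal _ h => False_rect _ (notF h) end).
case: (cl_union H) => [H1|/IH]; [left|by right].
apply: NNPP => ne; have [q Hq] := OB_neq ne.
have [r' [<- Hr']] := H1 1 (fun _ => q).
exact: Hq (Hr' ord0).
Qed.

Lemma cl_ext (A B : OB V X -> Prop) p : seteq A B -> cl A p -> cl B p.
Proof. by move=> E; apply: cl_mono => x /E. Qed.
Lemma clo_ext (A B : OB V X -> Prop) p : seteq A B -> clo sigma A p -> clo sigma B p.
Proof. by move=> E; apply: clo_mono => x /E. Qed.

End Gen.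

Section Img.
Variables (T U : Type) (f : T -> U) (m1 : T -> T -> T) (m2 : U -> U -> U).
Hypothesis fhom : forall a b, f (m1 a b) = m2 (f a) (f b).

Lemma img_prod A B : seteq (img f (setprod m1 A B)) (setprod m2 (img f A) (img f B)).
Proof.
move=> y; split.
  by move=> [x [[a [b [Aa [Bb ->]]]] ->]]; exists (f a), (f b); rewrite fhom; split; [exists a|split; [exists b|]].
move=> [_ [_ [[a [Aa ->]] [[b [Bb ->]] ->]]]]; exists (m1 a b); split; last by rewrite fhom.
by exists a, b.
Qed.

Lemma img_plus A : seteq (img f (splus m1 A)) (splus m2 (img f A)).
Proof.
move=> y; split.
  move=> [x [Hx ->]] B HB HBm.
  pose B' := fun x => B (f x).
  have : B' x.
    apply: Hx => [a Aa|a b]; first by apply: HB; exists a.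
    by rewrite /B' fhom; apply: HBm.
  by [].
move=> Hy; apply: (Hy (img f (splus m1 A))).
  by move=> _ [a [Aa ->]]; exists a; split => //; move=> B HB _; apply: HB.
move=> _ _ [a [Ha ->]] [b [Hb ->]]; exists (m1 a b); split; last by rewrite fhom.
by move=> B HB HBm; apply: (HBm); [apply: Ha|apply: Hb].
Qed.
End Img.

Lemma img_union T U (f : T -> U) A B : seteq (img f (fun x => A x \/ B x)) (fun y => img f A y \/ img f B y).
Proof.
move=> y; split; first by move=> [x [[Ax|Bx] ->]]; [left|right]; exists x.
by move=> [[x [Ax ->]]|[x [Bx ->]]]; exists x; split => //; [left|right].
Qed.

Lemma img_fin T U (f : T -> U) (s : list T) : seteq (img f (fun x => List.In x s)) (fun y => List.In y (List.map f s)).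
Proof.
move=> y; split; first by move=> [x [Hx ->]]; apply: List.in_map.
by move/List.in_map_iff => [x [<- Hx]]; exists x.
Qed.

Lemma img_ext T U (f : T -> U) A B : seteq A B -> seteq (img f A) (img f B).
Proof. by move=> E y; split => -[x [/E Hx ->]]; exists x. Qed.

Lemma seteq_sym T (A B : T -> Prop) : seteq A B -> seteq B A.
Proof. by move=> E x; split => /E. Qed.

Section Main.
Variables (V : fsg -> Prop) (X : finType).
Variable sigma : signature.
Arguments sigma : clear implicits.
Hypothesis Hsig : implicit_signature sigma.

Notation pVV := (@pV V X).

Lemma pV_mul a b : pVV (mulOB a b) = mulOB (pVV a) (pVV b).
Proof. by apply: OB_ext. Qed.

Lemma pV_apply k w (ps : 'I_k -> OB Sall X) : pVV (applyOB w ps) = applyOB w (fun i => pVV (ps i)).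
Proof. by apply: OB_ext. Qed.

Lemma Om_pV p : Om sigma p -> Om sigma (pVV p).
Proof.
move=> Hp; apply: (Hp (fun p => Om sigma (pVV p))).
  move=> _ [x ->]; have -> : pVV (genOB Sall x) = genOB V x by apply: OB_ext.
  exact: Om_gen.
move=> k w ps Hw Hps; rewrite pV_apply; exact: sigsub_apply.
Qed.

Lemma cl_pV (A : OB Sall X -> Prop) p : cl A p -> cl (img pVV A) (pVV p).
Proof.
move=> H n qs.
have [r [Ar Hr]] := H n (fun i => @Pt Sall X (ptS (qs i)) I (ptphi (qs i))).
exists (pVV r); split; first by exists r.
move=> i; exact: (Hr i).
Qed.

Lemma full_sub (L : OB Sall X -> Prop) : forall q, img pVV (clo sigma L) q -> clo sigma (img pVV L) q.
Proof. move=> _ [p [[Om1 cl1] ->]]; split; [exact: Om_pV | exact: cl_pV]. Qed.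

Definition Good (L : OB Sall X -> Prop) :=
  forall q, clo sigma (img pVV L) q -> img pVV (clo sigma L) q.

Lemma Good_fin (s : list (OB Sall X)) : (forall x, List.In x s -> Om sigma x) ->
  Good (fun x => List.In x s).
Proof.
move=> Hs q [Omq clq].
have /cl_fin : cl (fun y => List.In y (List.map pVV s)) q by apply: cl_ext clq; apply: img_fin.
move/List.in_map_iff => [x [<- Hx]]; exists x; split => //; split; first exact: Hs.
exact: cl_refl.
Qed.

Lemma Good_union A B : Good A -> Good B -> Good (fun x => A x \/ B x).
Proof.
move=> GA GB q [Omq clq].
have /cl_union [H|H] := cl_ext (img_union pVV A B) clq.
- have [p [Hp ->]] := GA q (conj Omq H); exists p; split => //.
  by apply: clo_mono Hp => x; left.
- have [p [Hp ->]] := GB q (conj Omq H); exists p; split => //.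
  by apply: clo_mono Hp => x; right.
Qed.

Lemma Good_ext A B : seteq A B -> Good A -> Good B.
Proof.
move=> E GA q Hq; have [p [Hp ->]] := GA q (clo_ext (img_ext pVV (seteq_sym E)) Hq).
by exists p; split => //; apply: clo_ext Hp.
Qed.

Lemma Good_prod A B :
  (forall q, clo sigma (setprod (@mulOB V X) (img pVV A) (img pVV B)) q ->
     setprod (@mulOB V X) (clo sigma (img pVV A)) (clo sigma (img pVV B)) q) ->
  Good A -> Good B -> Good (setprod (@mulOB Sall X) A B).
Proof.
move=> PR GA GB q Hq.
have /PR [q1 [q2 [H1 [H2 ->]]]] := clo_ext (img_prod pV_mul A B) Hq.
have [p1 [[O1 C1] ->]] := GA q1 H1; have [p2 [[O2 C2] ->]] := GB q2 H2.
exists (mulOB p1 p2); split; last by rewrite pV_mul.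
split; [exact: Om_mul | exact: cl_mul].
Qed.

Lemma Good_plus A :
  (forall q, clo sigma (splus (@mulOB V X) (img pVV A)) q ->
     sigsub sigma (clo sigma (img pVV A)) q) ->
  Good A -> Good (splus (@mulOB Sall X) A).
Proof.
move=> PR GA q Hq.
have /PR Hs := clo_ext (img_plus pV_mul A) Hq.
apply: (Hs (img pVV (clo sigma (splus (@mulOB Sall X) A)))).
  move=> a /GA [p [Hp ->]]; exists p; split => //.
  by apply: clo_mono Hp => x Ax B HB _; apply: HB.
move=> k w ps Hw Hps.
have Hf : forall i, { p | clo sigma (splus (@mulOB Sall X) A) p /\ ps i = pVV p }.
  by move=> i; apply: constructive_indefinite_description; apply: Hps.
pose f := fun i => proj1_sig (Hf i).
exists (applyOB w f); split.
  split.
    by apply: sigsub_apply => // i; case: (proj2_sig (Hf i)) => -[].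
  apply: cl_apply; last by move=> i; case: (proj2_sig (Hf i)) => -[].
  by move=> a b Ha Hb B HB HBm; apply: (HBm); [apply: Ha|apply: Hb].
rewrite pV_apply; congr (applyOB w _); apply: functional_extensionality => i.
by case: (proj2_sig (Hf i)).
Qed.

End Main.

Lemma mulOB_assoc V X (a b c : OB V X) : mulOB (mulOB a b) c = mulOB a (mulOB b c).
Proof. by apply: OB_ext => S hS phi /=; rewrite /smul fsg_assoc. Qed.

Lemma foldl_word X (a b : OB Sall X) (l : seq X) :
  foldl (fun acc y => mulOB acc (genOB Sall y)) (mulOB a b) l =
  mulOB a (foldl (fun acc y => mulOB acc (genOB Sall y)) b l).
Proof. by elim: l b => //= y l IH b; rewrite mulOB_assoc IH. Qed.

Lemma word_mul (X : finType) (u v : X * seq X) : word (nwmul u v) = mulOB (word u) (word v).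
Proof.
by case: u v => u1 u2 [v1 v2]; rewrite /word /nwmul /= foldl_cat /= foldl_word.
Qed.

Lemma Om_word (X : finType) (sigma : signature) : implicit_signature sigma ->
  forall u : X * seq X, Om sigma (word u).
Proof.
move=> Hs [u1 u2]; rewrite /word /=.
have : Om sigma (genOB Sall u1) by apply: Om_gen.
elim: u2 (genOB Sall u1) => //= y l IH acc Hacc; apply: IH.
by apply: Om_mul => //; apply: Om_gen.
Qed.

Lemma rat_img (V : fsg -> Prop) (X : finType) (sigma : signature) L :
  rat (@mulOB Sall X) (Om sigma) L -> rat (@mulOB V X) (Om sigma) (img (@pV V X) L).
Proof.
elim => [s Hs|A B _ IA _ IB|A B _ IA _ IB|A _ IA|A B _ IA E].
- apply: rat_ext; last by apply: seteq_sym; apply: img_fin.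
  apply: rat_fin => x /List.in_map_iff [y [<- Hy]]; apply: Om_pV; exact: Hs.
- by apply: rat_ext; [apply: rat_union IA IB | apply: seteq_sym; apply: img_union].
- apply: rat_ext; [apply: rat_prod IA IB | apply: seteq_sym; apply: img_prod].
  by move=> a b; apply: pV_mul.
- apply: rat_ext; [apply: rat_plus IA | apply: seteq_sym; apply: img_plus].
  by move=> a b; apply: pV_mul.
- by apply: rat_ext IA _; apply: img_ext.
Qed.

Unset Implicit Arguments.
Theorem corollary4p2 (sigma : signature) (V : fsg -> Prop) :
  implicit_signature sigma -> pseudovariety V ->
  (sigma_PR V sigma -> sigma_full V sigma) /\
  (strongly_sigma_PR V sigma -> strongly_sigma_full V sigma).
Proof.
move=> Hs _; split.
- move=> PR X L' [L [HL E]] q; split; first exact: full_sub.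
  apply: (Good_ext (seteq_sym E)); clear L' E q.
  have inC : forall A, ratlang A -> exists L, ratlang L /\
      seteq (img (@pV V X) (img (@word X) A)) (img (fun u => pV V (word u)) L).
    move=> A HA; exists A; split => // y; split.
      by move=> [_ [[u [Hu ->]] ->]]; exists u.
    by move=> [u [Hu ->]]; exists (word u); split => //; exists u.
  elim: HL => [s _|A B _ IA _ IB|A B HA IA HB IB|A HA IA|A B _ IA E].
  + apply: (Good_ext (seteq_sym (img_fin _ _))); apply: Good_fin => x /List.in_map_iff [u [<- _]].
    exact: Om_word.
  + apply: (Good_ext (seteq_sym (img_union _ _ _))); exact: Good_union.
  + apply: (Good_ext (seteq_sym (img_prod (@word_mul X) A B))); apply: Good_prod => //.
    move=> q; have [H _] := PR X _ _ (inC A HA) (inC B HB); exact: (proj1 (H q)).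
  + apply: (Good_ext (seteq_sym (img_plus (@word_mul X) A))); apply: Good_plus => //.
    move=> q; have [_ H] := PR X _ _ (inC A HA) (inC A HA); exact: (proj1 (H q)).
  + by apply: Good_ext IA; apply: img_ext.
- move=> PR X L HL q; split; first exact: full_sub.
  elim: HL q => [s Hs'|A B _ IA _ IB|A B HA IA HB IB|A HA IA|A B _ IA E].
  + exact: Good_fin.
  + exact: Good_union.
  + apply: Good_prod => //.
    move=> q; have [H _] := PR X _ _ (rat_img V HA) (rat_img V HB); exact: (proj1 (H q)).
  + apply: Good_plus => //.
    move=> q; have [_ H] := PR X _ _ (rat_img V HA) (rat_img V HA); exact: (proj1 (H q)).
  + exact: Good_ext IA.
Qed.
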